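(* Let $l\ge1$ and $\mu\ge0$ be integers. Then the Schur–Szegő composition of entire functions $$U:=\underbrace{e^xx*\cdots*e^xx}_{l\text{ factors}}*e^x(x-1)*e^x(x-2)*\cdots*e^x(x-\mu)$$ is of the form $e^xY$, where $Y$ is a polynomial of degree $l+\mu$ having a root of multiplicity $\mu+1$ at $0$ and $l-1$ simple negative roots.
   Context: Schur–Szegő composition of entire functions: for $f=\sum_{j\ge0}\gamma_jx^j/j!$ and $g=\sum_{j\ge0}\delta_jx^j/j!$ (everywhere convergent series) one sets $f*g=\sum_{j\ge0}\gamma_j\delta_jx^j/j!$; it is commutative and associative. *)

(* Defs.v *)
From HB Require Import structures.
From mathcomp Require Import all_boot all_order all_algebra.
From mathcomp Require Import all_classical all_reals all_analysis.
Set Implicit Arguments. Unset Strict Implicit. Unset Printing Implicit Defensive.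
Import Order.TTheory GRing.Theory Num.Theory.
Local Open Scope ring_scope.

(* An entire function f = \sum_j gamma_j x^j / j! is represented by its
   sequence of "exponential" coefficients gamma : nat -> R. *)

Definition egf_partial {R : realType} (gamma : nat -> R) (x : R) : nat -> R :=
  series (fun j => gamma j * x ^+ j / (j`!)%:R).

(* Schur–Szegő composition: f * g = \sum_j gamma_j delta_j x^j / j!. *)
Definition ssz {R : realType} (gamma delta : nat -> R) : nat -> R :=
  fun j => gamma j * delta j.

(* Iterated composition f_1 * f_2 * ... * f_n (the empty composition is e^x,
   whose coefficients are all 1, the neutral element). *)
Definition ssz_list {R : realType} (fs : seq (nat -> R)) : nat -> R :=
  foldr ssz (fun _ => 1) fs.

(* Exponential coefficients of e^x p(x) for a polynomial p:
   e^x x^i = \sum_j j (j-1) ... (j-i+1) x^j / j!, hence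
   gamma_j = \sum_i p_i * j^_i (falling factorial). *)
Definition expPolyCoef {R : realType} (p : {poly R}) : nat -> R :=
  fun j => \sum_(i < size p) p`_i * (j ^_ i)%:R.

Definition U_coef {R : realType} (l mu : nat) : nat -> R :=
  ssz_list (nseq l (expPolyCoef 'X) ++
            [seq expPolyCoef ('X - k%:R%:P) | k <- iota 1 mu]).

(* Main.v *)
Require Import Defs.
From HB Require Import structures.
From mathcomp Require Import all_boot all_order all_algebra.
From mathcomp Require Import all_classical all_reals all_analysis.
From mathcomp Require Import ring lra polyrcf zify.
Import Order.TTheory GRing.Theory Num.Theory.
Import numFieldNormedType.Exports.
Local Open Scope classical_set_scope.
Local Open Scope ring_scope.

Section Coefs.
Variable R : realType.
Implicit Types (p : {poly R}).

Lemma epcW p N j : (size p <= N)%N ->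
  expPolyCoef p j = \sum_(i < N) p`_i * (j ^_ i)%:R.
Proof.
move=> hN; rewrite /expPolyCoef (big_ord_widen _ (fun i => p`_i * (j ^_ i)%:R) hN).
rewrite big_mkcond /=; apply: eq_bigr => i _; case: ifP => // /negbT.
by rewrite -leqNgt => h; rewrite nth_default // mul0r.
Qed.

Lemma ffE j i : (j * j ^_ i = j ^_ i.+1 + i * j ^_ i)%N.
Proof.
rewrite ffactnSr; case: (leqP i j) => h.
  by rewrite [(i * _)%N]mulnC -mulnDr subnK // mulnC.
by rewrite ffact_small // !muln0 mul0n.
Qed.

Lemma epcXD p j : expPolyCoef ('X * (p + p^`())) j = j%:R * expPolyCoef p j.
Proof.
set N := size p.
have s1 : leq (size ('X * (p + p^`()))) N.+1.
  apply: (leq_trans (size_polyMleq _ _)); rewrite size_polyX /=.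
  apply: (leq_trans (size_polyD _ _)); rewrite geq_max leqnn /=.
  have [->|pn0] := eqVneq p 0; first by rewrite deriv0 size_poly0.
  exact/ltnW/lt_size_deriv.
rewrite (epcW _ _ _ s1) (epcW p N.+1 j) ?leqnSn // big_ord_recl coefXM eqxx mul0r add0r.
rewrite mulr_sumr.
rewrite (eq_bigr (fun i : 'I_N.+1 => p`_i * (j ^_ i.+1)%:R + p`_i * (i * j ^_ i)%:R)); last first.
  by move=> i _; rewrite mulrCA -natrM ffE natrD mulrDr.
rewrite big_split /= big_ord_recr /= [p`_N]nth_default // mul0r addr0.
rewrite big_ord_recl /= mul0n mulr0 add0r -big_split /=.
apply: eq_bigr => i _; rewrite coefXM /= coefD coef_deriv mulrDl.
congr (_ + _); rewrite /bump /= !add0n add1n natrM -mulr_natl; ring.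
Qed.

Definition Yk (m k : nat) : {poly R} := iter k (fun P => 'X * (P + P^`())) ('X^m).

Lemma epcYk m k j : expPolyCoef (Yk m k) j = j%:R ^+ k * (j ^_ m)%:R.
Proof.
elim: k => [|k IH].
  rewrite /Yk /= /expPolyCoef size_polyXn big_ord_recr /= big1 => [|i _].
    by rewrite coefXn eqxx add0r !mul1r.
  by rewrite coefXn ltn_eqF // mul0r.
by rewrite /Yk iterS -/(Yk m k) epcXD IH exprS mulrA.
Qed.

Lemma ssz_listE (fs : seq (nat -> R)) j : ssz_list fs j = \prod_(f <- fs) f j.
Proof. by elim: fs => [|f fs IH]; rewrite ?big_nil ?big_cons //= /ssz IH. Qed.

Lemma epcX j : expPolyCoef ('X : {poly R}) j = j%:R.
Proof.
rewrite /expPolyCoef size_polyX !big_ord_recl big_ord0 /= !coefX /=.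
by rewrite mul0r add0r addr0 mul1r ffactn1.
Qed.

Lemma epcXsubC (k : nat) j : expPolyCoef ('X - k%:R%:P : {poly R}) j = j%:R - k%:R.
Proof.
rewrite /expPolyCoef size_XsubC !big_ord_recl big_ord0 /= !coefB !coefX !coefC /=.
rewrite ffactn1 ffactn0 addr0 subr0 sub0r mulr1 mul1r; ring.
Qed.

Lemma prod_iota j n : \prod_(k <- iota 0 n) (j%:R - k%:R : R) = (j ^_ n)%:R.
Proof.
elim: n => [|n IH]; first by rewrite big_nil.
rewrite -addn1 iotaD big_cat big_seq1 /= IH add0n addn1 ffactnSr natrM.
case: (leqP n j) => h; first by rewrite natrB.
by rewrite ffact_small // !mul0r.
Qed.

Lemma U_coefE l mu j : (1 <= l)%N ->
  U_coef l mu j = expPolyCoef (Yk mu.+1 l.-1) j.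
Proof.
move=> hl; rewrite epcYk /U_coef ssz_listE big_cat /= big_map.
have -> : \prod_(f <- nseq l (expPolyCoef 'X)) f j = (j%:R : R) ^+ l.
  elim: l {hl} => [|l IH]; first by rewrite big_nil.
  by rewrite /= big_cons IH epcX exprS.
under eq_bigr do rewrite epcXsubC.
rewrite -prod_iota /= big_cons subr0.
by case: l hl => // l _ /=; rewrite exprS mulrA [_ * j%:R]mulrC.
Qed.


Definition aa (x : R) (i j : nat) : R := (j ^_ i)%:R * x ^+ j / (j`!)%:R.

Lemma cvg_aa x i : series (aa x i) @ \oo --> x ^+ i * expR x.
Proof.
elim: i => [|i IH].
  rewrite expr0 mul1r.
  have -> : aa x 0 = exp_coeff x.
    by apply/funext => j; rewrite /aa /exp_coeff /= ffactn0 mul1r.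
  exact: is_cvg_series_exp_coeff.
rewrite (_ : x ^+ i.+1 * expR x = x * (x ^+ i * expR x)); last by rewrite exprS mulrA.
rewrite -cvg_shiftS.
have -> : (fun n => series (aa x i.+1) n.+1) = (fun n => x * series (aa x i) n).
  apply/funext => n; rewrite /series /= big_nat_recl // {1}/aa ffact0n /= mul0r mul0r add0r.
  rewrite mulr_sumr; apply: eq_bigr => k _; rewrite /aa ffactSS factS !natrM exprS.
  have h1 : (k.+1%:R : R) != 0 by rewrite pnatr_eq0.
  have h2 : (k`!%:R : R) != 0 by rewrite pnatr_eq0 -lt0n fact_gt0.
  field; by rewrite h2 -mulrS.
exact: cvgMl_tmp.
Qed.

Lemma cvg_sum_ord (n : nat) (f : nat -> nat -> R) (l : nat -> R) :
  (forall i, f i @ \oo --> l i) ->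
  (fun j => \sum_(i < n) f i j) @ \oo --> \sum_(i < n) l i.
Proof.
move=> hf; elim: n => [|n IH].
  under eq_fun do rewrite big_ord0. rewrite big_ord0; exact: cvg_cst.
under eq_fun do rewrite big_ord_recr /=. rewrite big_ord_recr /=.
exact: cvgD.
Qed.

Lemma cvg_epc p x : egf_partial (expPolyCoef p) x @ \oo --> expR x * p.[x].
Proof.
have -> : egf_partial (expPolyCoef p) x =
    (fun n => \sum_(i < size p) (p`_i * series (aa x i) n)).
  apply/funext => n; rewrite /egf_partial /series /= /expPolyCoef.
  under eq_bigr do rewrite mulr_suml mulr_suml.
  rewrite exchange_big /=; apply: eq_bigr => i _.
  rewrite mulr_sumr; apply: eq_bigr => j _; rewrite /aa; ring.
rewrite horner_coef mulr_sumr.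
have H := (@cvg_sum_ord (size p) (fun i n => p`_i * series (aa x i) n) (fun i => expR x * (p`_i * x ^+ i))).
apply: H => i.
rewrite (_ : expR x * _ = p`_i * (x ^+ i * expR x)); last by ring.
apply: cvgMl_tmp; exact: cvg_aa.
Qed.


Fixpoint Zp (m k : nat) : {poly R} :=
  if k is k'.+1 then ('X + m%:R%:P) * Zp m k' + 'X * (Zp m k')^`() else 1.

Lemma Yk_Z m k : Yk m.+1 k = 'X^(m.+1) * Zp m.+1 k.
Proof.
elim: k => [|k IH]; first by rewrite /Yk /= mulr1.
rewrite /Yk iterS -/(Yk m.+1 k) IH /= derivM derivXn /= polyC_natr -mulr_natl exprS.
ring.
Qed.

Lemma sqr_sign n : (-1) ^+ n * (-1) ^+ n = 1 :> R.
Proof. by rewrite -exprD addnn -signr_odd odd_double expr0. Qed.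

Lemma prod_pos_lt (z : R) s : all (fun r => r < z) s -> 0 < \prod_(r <- s) (z - r).
Proof.
elim: s => [|r s IH] /=; first by rewrite big_nil ltr01.
by case/andP => h1 h2; rewrite big_cons mulr_gt0 ?subr_gt0 // IH.
Qed.

Lemma prod_sign_gt (z : R) s : all (fun r => z < r) s ->
  0 < (-1) ^+ size s * \prod_(r <- s) (z - r).
Proof.
elim: s => [|r s IH] /=; first by rewrite big_nil mul1r ltr01.
case/andP => h1 h2; rewrite big_cons exprS mulrACA mulN1r opprB.
by rewrite mulr_gt0 ?subr_gt0 // IH.
Qed.

Lemma interlace (p : {poly R}) (u x : R) (a : seq R) :
  sorted <%R (x :: a) -> all (fun z => z <= u) a ->
  (forall a1 z a2, x :: a = a1 ++ z :: a2 -> 0 < (-1) ^+ size a2 * p.[z]) ->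
  exists t, [/\ size t = size a, sorted <%R t, all (root p) t,
                all (fun y => x < y) t & all (fun y => y < u) t].
Proof.
elim: a x => [|y a IH] x /= hs hu hsg; first by exists [::].
move/andP: hs => [hxy hs]; move/andP: hu => [hyu hu].
have hx := hsg [::] x (y :: a) erefl.
have hy := hsg [:: x] y a erefl.
have hprod : p.[x] * p.[y] < 0.
  have := mulr_gt0 hx hy; rewrite /= exprS.
  set e := (-1) ^+ size a.
  have ee : e * e = 1 by rewrite sqr_sign.
  have -> : (-1 * e * p.[x]) * (e * p.[y]) = - (p.[x] * p.[y]) * (e * e) by ring.
  by rewrite ee mulr1 oppr_gt0.
have [c hc rc] := poly_ivtoo (ltW hxy) hprod.
move: hc; rewrite in_itv /= => /andP[hxc hcy].
have [t [ht1 ht2 ht3 ht4 ht5]] :=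
  IH y hs hu (fun a1 z a2 e => hsg (x :: a1) z a2 (congr1 (cons x) e)).
exists (c :: t); split => /=.
- by rewrite ht1.
- rewrite (path_sortedE lt_trans) ht2 andbT.
  by apply: sub_all ht4 => w /= hw; apply: lt_trans hcy hw.
- by rewrite rc ht3.
- rewrite hxc /=; apply: sub_all ht4 => w /= hw; exact: lt_trans hxy hw.
- by rewrite ht5 andbT (lt_le_trans hcy hyu).
Qed.

Lemma prod_monic (p : {poly R}) s : p \is monic -> size p = (size s).+1 ->
  uniq s -> all (root p) s -> p = \prod_(r <- s) ('X - r%:P).
Proof.
move=> hm hsz hu hr.
have [q hq] := uniq_roots_prod_XsubC hr (ltac:(by rewrite uniq_rootsE)).
have mP := monic_prod_XsubC s predT (fun r => r).
have qn0 : q != 0.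
  by apply/eqP => q0; move: hm; rewrite hq q0 mul0r monicE lead_coef0 eq_sym oner_eq0.
have := hsz; rewrite hq size_Mmonic // size_prod_XsubC addnS /= => hs.
have /size_poly1P [c _ hc] : size q == 1%N by apply/eqP; apply: (@addIn (size s)); rewrite hs add1n.
move: hm; rewrite hq monicE lead_coef_Mmonic // hc lead_coefC => /eqP ->.
by rewrite mul1r.
Qed.


Lemma Z_roots m k : (0 < m)%N -> exists s : seq R,
  [/\ size s = k, sorted <%R s, all (fun r => r < 0) s &
      Zp m k = \prod_(r <- s) ('X - r%:P)].
Proof.
move=> hm; elim: k => [|k [s [hs1 hs2 hs3 hs4]]].
  by exists [::]; rewrite big_nil.
set Z := Zp m k.
have -> : Zp m k.+1 = ('X + m%:R%:P) * Z + 'X * Z^`() by [].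
set Z1 := ('X + m%:R%:P) * Z + 'X * Z^`().
have Zmon : Z \is monic by rewrite /Z hs4 monic_prod_XsubC.
have Zsz : size Z = k.+1 by rewrite /Z hs4 size_prod_XsubC hs1.
have Zn0 : Z != 0 by apply: monic_neq0.
have sz1 : size (('X + m%:R%:P) * Z) = k.+2.
  by rewrite size_Mmonic ?Zsz ?size_XaddC // -size_poly_eq0 size_XaddC.
have sz2 : (size ('X * Z^`())%R < k.+2)%N.
  apply: (leq_ltn_trans (size_polyMleq _ _)); rewrite size_polyX /=.
  by have := lt_size_deriv Zn0; rewrite Zsz.
have Z1sz : size Z1 = k.+2 by rewrite /Z1 size_polyDl ?sz1.
have Z1mon : Z1 \is monic.
  by rewrite monicE /Z1 lead_coefDl ?sz1 // lead_coef_Mmonic // -monicE monicXaddC.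
have Z0 : 0 < Z.[0].
  rewrite /Z hs4 horner_prod; under eq_bigr do rewrite hornerXsubC.
  exact: prod_pos_lt.
have Z10 : 0 < Z1.[0].
  rewrite /Z1 !hornerE; apply: mulr_gt0 => //.
  by rewrite ltr0n.
have hsg : forall a1 z a2, rcons s 0 = a1 ++ z :: a2 ->
    0 < (-1) ^+ size a2 * Z1.[z].
  move=> a1 z a2; case/lastP: a2 => [|a2 w].
    rewrite cats1 => /rcons_inj [_ <-]; by rewrite expr0 mul1r.
  rewrite -rcons_cons -rcons_cat => /rcons_inj [hs' hw].
  have zneg : z < 0 by move/allP: hs3; apply; rewrite hs' mem_cat mem_head orbT.
  move: hs2; rewrite (sorted_pairwise lt_trans) hs' pairwise_cat allrel_consr /=.
  case/and3P => /andP[h1 _] _; rewrite /= => /andP[h2 _].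
  pose Q := \prod_(r <- a1) ('X - r%:P) * \prod_(r <- a2) ('X - r%:P).
  have ZE : Z = ('X - z%:P) * Q.
    by rewrite /Z hs4 hs' big_cat big_cons /= mulrCA.
  have key : forall Q0 : {poly R},
      (('X + m%:R%:P) * (('X - z%:P) * Q0) + 'X * (('X - z%:P) * Q0)^`()).[z] = z * Q0.[z].
    move=> Q0; rewrite derivM derivXsubC mul1r !(hornerD, hornerM, hornerX, hornerC, hornerXsubC).
    by rewrite hornerN hornerC subrr !(mul0r, mulr0, add0r, addr0).
  have -> : Z1.[z] = z * Q.[z] by rewrite /Z1 ZE key.
  have -> : Q.[z] = \prod_(r <- a1) (z - r) * \prod_(r <- a2) (z - r).
    by rewrite /Q hornerM !horner_prod; congr (_ * _); apply: eq_bigr => r _; rewrite hornerXsubC.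
  have P1 : 0 < \prod_(r <- a1) (z - r) by apply: prod_pos_lt.
  have P2 := prod_sign_gt _ _ h2.
  rewrite size_rcons exprS.
  have -> : (-1 * (-1) ^+ size a2 * (z * (\prod_(r <- a1) (z - r) * \prod_(r <- a2) (z - r))))
     = (- z) * (\prod_(r <- a1) (z - r) * ((-1) ^+ size a2 * \prod_(r <- a2) (z - r))) by ring.
  by apply: mulr_gt0; [rewrite oppr_gt0 | apply: mulr_gt0].
have [h [a hL]] : exists h a, rcons s 0 = h :: a by case: (s) => [|s0 s'] /=; eauto.
have hsorted : sorted <%R (h :: a).
  rewrite -hL -cats1 (sorted_pairwise lt_trans) pairwise_cat allrel1r hs3 /=.
  by rewrite -(sorted_pairwise lt_trans) hs2.
have hall : all (fun z => z <= 0) (h :: a).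
  rewrite -hL all_rcons lexx /=; apply: sub_all hs3 => r /=; exact: ltW.
have [t [ht1 ht2 ht3 ht4 ht5]] :=
  @interlace Z1 0 h a hsorted (ltac:(by case/andP: hall)) (fun a1 z a2 e => hsg a1 z a2 (etrans hL e)).
have tsz : size t = k by have := congr1 size hL; rewrite size_rcons /= hs1 ht1 => -[].
have tu : uniq t by apply: (sorted_uniq lt_trans) => //; exact: ltxx.
have [q hq] := uniq_roots_prod_XsubC ht3 (ltac:(by rewrite uniq_rootsE)).
have mP := monic_prod_XsubC t predT (fun r => r).
have qn0 : q != 0.
  by apply/eqP => q0; move: Z1mon; rewrite hq q0 mul0r monicE lead_coef0 eq_sym oner_eq0.
have qsz : size q = 2.
  have := Z1sz; rewrite hq size_Mmonic // size_prod_XsubC tsz addnS /= => hs.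
  by apply: (@addIn k); rewrite hs.
have q1 : q`_1 = 1.
  by move: Z1mon; rewrite hq monicE lead_coef_Mmonic // lead_coefE qsz => /eqP.
have qE : forall y, q.[y] = q`_0 + y.
  by move=> y; rewrite horner_coef qsz !big_ord_recl big_ord0 /= q1 expr0 expr1 mulr1 mul1r addr0.
set d := - q`_0.
have hh : 0 < q.[h].
  have := hsg [::] h a hL; rewrite hq hornerM.
  have P := prod_sign_gt _ _ ht4.
  rewrite horner_prod (eq_bigr (fun r => h - r)); last by move=> r _; rewrite hornerXsubC.
  by rewrite -ht1 mulrCA (pmulr_lgt0 _ P).
have hd : d < h by move: hh; rewrite qE /d => hh'; lra.
have h0 : h <= 0 by case/andP: hall.
have dneg : d < 0 by apply: lt_le_trans hd h0.
exists (d :: t); split.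
- by rewrite /= tsz.
- rewrite /= (path_sortedE lt_trans) ht2 andbT.
  by apply: sub_all ht4 => w /= hw; apply: lt_trans hd hw.
- by rewrite /= dneg ht5.
- apply: prod_monic => //.
  + by rewrite Z1sz /= tsz.
  + rewrite /= tu andbT; apply/negP => /(allP ht4) /=.
    by move=> /(lt_trans hd); rewrite ltxx.
  + rewrite /= ht3 andbT /root hq hornerM qE /d addrN mul0r.
    by [].
Qed.

End Coefs.

Theorem proposition5p1 (R : realType) (l mu : nat) (hl : (1 <= l)%N) :
  exists Y : {poly R},
    (forall x : R, egf_partial (U_coef l mu) x @ \oo --> expR x * Y.[x]) /\
    size Y = (l + mu).+1 /\
    mup 0 Y = mu.+1 /\
    exists s : seq R,
      [/\ size s = l.-1, uniq s, all (fun r => r < 0) s &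
          forall r, r \in s -> mup r Y = 1%N].
Proof.
have [s [hs1 hs2 hs3 hs4]] := @Z_roots R mu.+1 l.-1 (ltn0Sn mu).
exists ('X^(mu.+1) * Zp R mu.+1 l.-1).
have hu : uniq s by apply: (sorted_uniq lt_trans) => //; exact: ltxx.
have Xn0 : ('X^(mu.+1) : {poly R}) != 0 by apply: monic_neq0; apply: monicXn.
have Pn0 : Zp R mu.+1 l.-1 != 0 by rewrite hs4 monic_neq0 // monic_prod_XsubC.
have hX : ('X^(mu.+1) : {poly R}) = ('X - 0%:P) ^+ mu.+1 by rewrite polyC0 subr0.
split.
  move=> x; rewrite -Yk_Z.
  rewrite (_ : U_coef l mu = expPolyCoef (Yk R mu.+1 l.-1)).
    exact: cvg_epc.
  by apply/funext => j; rewrite U_coefE.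
split.
  rewrite hs4 size_Mmonic ?monic_prod_XsubC // size_polyXn size_prod_XsubC hs1.
  lia.
split.
  rewrite mupM // hX mup_XsubCX eqxx hs4 mu_prod_XsubC.
  suff -> : count_mem 0 s = 0%N by rewrite addn0.
  apply/count_memPn/negP => /(allP hs3); by rewrite ltxx.
exists s; split => // r hr.
rewrite mupM // hX mup_XsubCX hs4 mu_prod_XsubC count_uniq_mem // hr.
have rneg : r < 0 by apply: (allP hs3).
by rewrite gt_eqF.
Qed.
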